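(* There exists an absolute constant $C$ such that the following holds. Let $W$ be a non-negative integer-valued random variable with $EW=\lambda\in(0,\infty)$, let $Y\sim\mathrm{Poi}(\lambda)$, and for integers $k\ge0$ let $$\eta_k=\sup\Big\{\frac{P(W\ge r)}{P(Y\ge r)}: r \text{ integer},\ \lambda\le r\le k\Big\}$$ (with the supremum of the empty set equal to $0$). Then for every non-negative, non-decreasing function $g:\{0,1,2,\dots\}\to\mathbb R$ and every integer $k\ge0$, $$E\,g(W\wedge k)\le C(\eta_k+1)\,E\,g(Y\wedge k).$$
   Context: $a\wedge b=\min(a,b)$; $\mathrm{Poi}(\lambda)$ is the Poisson distribution with mean $\lambda$. *)

(* Defs.v *)
From Stdlib Require Import Reals Lra Lia Arith Factorial.
Open Scope R_scope.

(* A non-negative integer-valued random variable is represented by its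
   probability mass function p : nat -> R  (p n = P(W = n)). *)

Definition poi (lam : R) (n : nat) : R := exp (- lam) * lam ^ n / INR (fact n).

Fixpoint psum (p : nat -> R) (r : nat) : R :=
  match r with
  | O => 0
  | S r' => psum p r' + p r'
  end.

(* tail p r = P(W >= r) = 1 - P(W < r)  (for a probability pmf p) *)
Definition tail (p : nat -> R) (r : nat) : R := 1 - psum p r.

(* E g(W /\ k) = sum_{n<k} g(n) P(W = n) + g(k) P(W >= k) *)
Fixpoint gsum (p g : nat -> R) (k : nat) : R :=
  match k with
  | O => 0
  | S k' => gsum p g k' + g k' * p k'
  end.
Definition Etrunc (p g : nat -> R) (k : nat) : R := gsum p g k + g k * tail p k.

Definition eta_term (p : nat -> R) (lam : R) (r : nat) : R :=
  if Rle_dec lam (INR r) then tail p r / tail (poi lam) r else 0.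

(* eta p lam k = sup { P(W>=r)/P(Y>=r) : r integer, lam <= r <= k }, with sup of
   the empty set = 0.  All ratios are >= 0, so taking the max together with 0
   gives exactly this supremum (the set is finite). *)
Fixpoint eta (p : nat -> R) (lam : R) (k : nat) : R :=
  match k with
  | O => Rmax 0 (eta_term p lam 0)
  | S k' => Rmax (eta p lam k') (eta_term p lam (S k'))
  end.

(* Main.v *)
Require Import Defs.
From Stdlib Require Import Reals Lra Lia Arith Factorial.
Open Scope R_scope.

Lemma poi_S lam n : poi lam (S n) = poi lam n * lam / INR (S n).
Proof.
  unfold poi. rewrite fact_simpl, mult_INR. change (lam ^ S n) with (lam * lam ^ n).
  assert (INR (fact n) <> 0) by (apply not_0_INR; apply fact_neq_0).
  assert (INR (S n) <> 0) by (apply not_0_INR; lia).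
  field; auto.
Qed.

Lemma poi_pos lam n : 0 < lam -> 0 < poi lam n.
Proof.
  intros H. unfold poi. apply Rdiv_lt_0_compat.
  - apply Rmult_lt_0_compat; [apply exp_pos | apply pow_lt; auto].
  - apply lt_0_INR, lt_O_fact.
Qed.

Lemma exp_in_exp x : exp_in x (exp x).
Proof. unfold exp; destruct (exist_exp x); simpl; auto. Qed.

Lemma psum_poi_eq lam n :
  psum (poi lam) (S n) = exp (-lam) * sum_f_R0 (fun i => / INR (fact i) * lam ^ i) n.
Proof.
  induction n.
  - simpl. unfold poi. simpl. field.
  - change (psum (poi lam) (S (S n))) with (psum (poi lam) (S n) + poi lam (S n)).
    rewrite IHn, tech5. unfold poi.
    unfold Rdiv; ring.
Qed.

Lemma psum_poi_le1 lam n : 0 < lam -> psum (poi lam) n <= 1.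
Proof.
  intro Hl. destruct n. simpl; lra.
  rewrite psum_poi_eq.
  assert (H : sum_f_R0 (fun i => / INR (fact i) * lam ^ i) n <= exp lam).
  { apply growing_ineq.
    - intro m. rewrite tech5.
      assert (0 < / INR (fact (S m)) * lam ^ S m).
      { apply Rmult_lt_0_compat. apply Rinv_0_lt_compat, lt_0_INR, lt_O_fact.
        apply pow_lt; auto. }
      lra.
    - apply exp_in_exp. }
  assert (exp (-lam) * exp lam = 1) by (rewrite <- exp_plus; replace (-lam+lam) with 0 by ring; apply exp_0).
  assert (0 < exp (-lam)) by apply exp_pos.
  nra.
Qed.

Lemma tail_poi_pos lam n : 0 < lam -> 0 < tail (poi lam) n.
Proof.
  intro Hl. unfold tail.
  pose proof (psum_poi_le1 lam (S n) Hl). simpl in H.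
  pose proof (poi_pos lam n Hl). lra.
Qed.

Lemma pair_ineq lam : forall t i, INR (i + t + 1) <= lam ->
  poi lam i <= poi lam (i + 2 * t + 1).
Proof.
  induction t; intros i H.
  - replace (i + 2*0 + 1)%nat with (S i) by lia.
    rewrite poi_S. replace (i + 0 + 1)%nat with (S i) in H by lia.
    assert (h1 : 0 < INR (S i)) by (apply lt_0_INR; lia).
    assert (h2 : 0 < poi lam i) by (apply poi_pos; lra).
    apply (Rmult_le_reg_r (INR (S i))); auto.
    unfold Rdiv. rewrite Rmult_assoc, Rmult_assoc, Rinv_l by lra. nra.
  - assert (H' : INR (S i + t + 1) <= lam) by (replace (S i + t + 1)%nat with (i + S t + 1)%nat by lia; auto).
    specialize (IHt (S i) H').
    replace (i + 2 * S t + 1)%nat with (S (S i + 2 * t + 1)) by lia.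
    rewrite poi_S. rewrite poi_S in IHt.
    set (A := poi lam (S i + 2 * t + 1)) in *.
    assert (h1 : 0 < INR (S i)) by (apply lt_0_INR; lia).
    assert (h3 : 0 < INR (S (S i + 2 * t + 1))) by (apply lt_0_INR; lia).
    assert (hl : 0 < lam) by (pose proof (pos_INR (i + S t)); rewrite plus_INR in H; simpl in H; lra).
    assert (h2 : 0 < poi lam i) by (apply poi_pos; lra).
    assert (Hsq : INR (S i) * INR (S (S i + 2 * t + 1)) <= lam * lam).
    { assert (E1 : INR (S i) = INR i + 1) by apply S_INR.
      assert (E2 : INR (S (S i + 2 * t + 1)) = INR i + 2 * INR t + 3).
      { rewrite !S_INR, !plus_INR, !S_INR, mult_INR, !S_INR. simpl INR. ring. }
      assert (E3 : INR (i + S t + 1) = INR i + INR t + 2).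
      { rewrite !plus_INR, !S_INR. simpl INR. ring. }
      rewrite E1, E2. rewrite E3 in H. pose proof (pos_INR t). pose proof (pos_INR i). nra. }
    unfold Rdiv in *.
    assert (IH2 : poi lam i * lam <= A * INR (S i)).
    { replace (poi lam i * lam) with (poi lam i * lam * / INR (S i) * INR (S i)) by (field; lra).
      apply Rmult_le_compat_r; lra. }
    apply (Rmult_le_reg_r (INR (S (S i + 2 * t + 1)))); auto.
    rewrite Rmult_assoc, Rmult_assoc, Rinv_l by lra.
    apply (Rmult_le_reg_r lam); auto.
    assert (0 <= A) by (unfold A; left; apply poi_pos; lra).
    nra.
Qed.

Lemma sum_pair lam : forall t i, INR (i + t) <= lam ->
  psum (poi lam) (i + t) - psum (poi lam) i <=
  psum (poi lam) (i + 2 * t) - psum (poi lam) (i + t).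
Proof.
  induction t; intros i H.
  - replace (i + 2 * 0)%nat with i by lia. replace (i + 0)%nat with i by lia. lra.
  - assert (H' : INR (S i + t) <= lam) by (replace (S i + t)%nat with (i + S t)%nat by lia; auto).
    specialize (IHt (S i) H').
    assert (P : poi lam i <= poi lam (i + 2 * t + 1)).
    { apply pair_ineq. replace (i + t + 1)%nat with (i + S t)%nat by lia; auto. }
    replace (i + S t)%nat with (S i + t)%nat by lia.
    replace (i + 2 * S t)%nat with (S (S i + 2 * t)) by lia.
    replace (i + 2 * t + 1)%nat with (S i + 2 * t)%nat in P by lia.
    change (psum (poi lam) (S (S i + 2 * t))) with
      (psum (poi lam) (S i + 2 * t) + poi lam (S i + 2 * t)).
    change (psum (poi lam) (S i)) with (psum (poi lam) i + poi lam i) in IHt.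
    lra.
Qed.

Lemma tail_poi_half lam r : 0 < lam -> INR r <= lam -> 1 <= 2 * tail (poi lam) r.
Proof.
  intros Hl H.
  pose proof (sum_pair lam r 0 H). simpl plus in H0.
  replace (0 + r)%nat with r in H0 by lia.
  pose proof (psum_poi_le1 lam (r + (r + 0)) Hl).
  simpl psum in H0. unfold tail. replace (2 * r)%nat with (r + (r + 0))%nat in H0 by lia.
  lra.
Qed.

Lemma psum_nonneg p n : (forall n, 0 <= p n) -> 0 <= psum p n.
Proof. intro Hp; induction n; simpl; [lra | pose proof (Hp n); lra]. Qed.

Lemma eta_nonneg p lam k : 0 <= eta p lam k.
Proof. induction k; simpl; [apply Rmax_l | eapply Rle_trans; [exact IHk | apply Rmax_l]]. Qed.

Lemma eta_term_le p lam : forall k r, (r <= k)%nat -> eta_term p lam r <= eta p lam k.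
Proof.
  induction k; intros r Hr.
  - replace r with 0%nat by lia. simpl. apply Rmax_r.
  - destruct (Nat.eq_dec r (S k)) as [->|ne].
    + simpl. apply Rmax_r.
    + simpl. eapply Rle_trans; [apply IHk; lia | apply Rmax_l].
Qed.

Lemma Etrunc_S q g k : Etrunc q g (S k) = Etrunc q g k + (g (S k) - g k) * tail q (S k).
Proof. unfold Etrunc, tail. simpl. ring. Qed.

Theorem lemma4p4 :
  exists C : R,
    forall (p : nat -> R) (lam : R),
      (forall n, 0 <= p n) ->
      infinite_sum p 1 ->
      infinite_sum (fun n => INR n * p n) lam ->
      0 < lam ->
      forall g : nat -> R,
        (forall n, 0 <= g n) ->
        (forall m n, (m <= n)%nat -> g m <= g n) ->
        forall k : nat,
          Etrunc p g k <= C * (eta p lam k + 1) * Etrunc (poi lam) g k.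
Proof.
  exists 2. intros p lam Hp _ _ Hl g Hg Hmon k.
  pose proof (eta_nonneg p lam k) as He.
  set (B := 2 * (eta p lam k + 1)).
  assert (Htail : forall r, (r <= k)%nat -> tail p r <= B * tail (poi lam) r).
  { intros r Hr.
    pose proof (tail_poi_pos lam r Hl) as Tp.
    destruct (Rle_dec lam (INR r)) as [Hle|Hlt].
    - pose proof (eta_term_le p lam k r Hr) as Et.
      unfold eta_term in Et. destruct (Rle_dec lam (INR r)); [|contradiction].
      assert (tail p r <= eta p lam k * tail (poi lam) r).
      { replace (tail p r) with (tail p r / tail (poi lam) r * tail (poi lam) r) by (field; lra).
        apply Rmult_le_compat_r; lra. }
      unfold B. nra.
    - pose proof (tail_poi_half lam r Hl ltac:(lra)).
      pose proof (psum_nonneg p r Hp). unfold tail at 1. unfold B. nra. }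
  assert (forall j, (j <= k)%nat -> Etrunc p g j <= B * Etrunc (poi lam) g j).
  { induction j; intros Hj.
    - unfold Etrunc, tail. simpl. pose proof (Hg 0%nat). unfold B. nra.
    - rewrite !Etrunc_S. pose proof (IHj ltac:(lia)).
      pose proof (Hmon j (S j) ltac:(lia)).
      pose proof (Htail (S j) Hj).
      assert ((g (S j) - g j) * tail p (S j) <= (g (S j) - g j) * (B * tail (poi lam) (S j))).
      { apply Rmult_le_compat_l; lra. }
      lra. }
  unfold B in H. apply H. lia.
Qed.
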